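(* Let $\alpha,\beta,\gamma\in\mathbb{Z}_2^n$ with $\alpha\ne0$, let $\omega=\omega(\alpha,\beta,\gamma)$ and $\omega'=\omega(-\alpha,\beta,\gamma)$. Then for all $i\in\{0,\dots,7\}$, $$e_iA_{\omega_0}\cdots A_{\omega_{n-1}}e_0^T=e_{i\oplus4}A_{\omega'_0}\cdots A_{\omega'_{n-1}}e_0^T.$$
   Context: For $x\in\mathbb{Z}_2^n$, $x=(x_0,\dots,x_{n-1})$ is identified with the integer $\sum_i x_i2^{n-1-i}$ and $-x$ is computed modulo $2^n$. For $\alpha,\beta,\gamma\in\mathbb{Z}_2^n$, $\omega(\alpha,\beta,\gamma)_i=4\alpha_i+2\beta_i+\gamma_i$. Indices $0,\dots,7$ are identified with $\mathbb{Z}_2^3$ via $(p_0,p_1,p_2)\leftrightarrow4p_0+2p_1+p_2$ (so $\oplus$ is bitwise XOR of 3-bit vectors); $e_0,\dots,e_7$ are the standard basis row vectors of $\mathbb{Q}^8$. $A_0$ is $\frac14$ times the $8\times8$ matrix with rows $(4,0,0,1,0,1,1,0)$, $(0,0,0,1,0,1,0,0)$, $(0,0,0,1,0,0,1,0)$, $(0,0,0,1,0,0,0,0)$, $(0,0,0,0,0,1,1,0)$, $(0,0,0,0,0,1,0,0)$, $(0,0,0,0,0,0,1,0)$, $(0,\dots,0)$, and $(A_k)_{i,j}=(A_0)_{i\oplus k,j\oplus k}$. *)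

(* Defs.v *)
From mathcomp Require Import all_boot all_order all_algebra.
Set Implicit Arguments. Unset Strict Implicit. Unset Printing Implicit Defensive.
Import GRing.Theory Num.Theory.
Local Open Scope ring_scope.

Definition bvec (n : nat) := {ffun 'I_n -> bool}.

(* integer value sum_i x_i 2^(n-1-i)  (x_0 is the most significant bit) *)
Definition bval n (x : bvec n) : nat := (\sum_(i < n) x i * 2 ^ (n.-1 - i))%N.

Definition of_nat n (m : nat) : bvec n :=
  [ffun i : 'I_n => odd ((m %% 2 ^ n) %/ 2 ^ (n.-1 - i))].

Definition bneg n (x : bvec n) : bvec n := of_nat n (2 ^ n - bval x).

Definition omega n (a b c : bvec n) (i : 'I_n) : 'I_8 :=
  inord (4 * a i + 2 * b i + c i).

(* XOR of indices identified with Z_2^3 via (p0,p1,p2) <-> 4p0+2p1+p2 *)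
Definition bit2 (k : 'I_8) : bool := odd (k %/ 4).
Definition bit1 (k : 'I_8) : bool := odd (k %/ 2).
Definition bit0 (k : 'I_8) : bool := odd k.
Definition xor8 (i k : 'I_8) : 'I_8 :=
  inord (4 * (bit2 i (+) bit2 k) + 2 * (bit1 i (+) bit1 k) + (bit0 i (+) bit0 k)).

Definition A0_table : seq (seq nat) :=
  [:: [:: 4; 0; 0; 1; 0; 1; 1; 0];
      [:: 0; 0; 0; 1; 0; 1; 0; 0];
      [:: 0; 0; 0; 1; 0; 0; 1; 0];
      [:: 0; 0; 0; 1; 0; 0; 0; 0];
      [:: 0; 0; 0; 0; 0; 1; 1; 0];
      [:: 0; 0; 0; 0; 0; 1; 0; 0];
      [:: 0; 0; 0; 0; 0; 0; 1; 0];
      [:: 0; 0; 0; 0; 0; 0; 0; 0]].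

Definition A0 : 'M[rat]_8 :=
  \matrix_(i < 8, j < 8) ((nth 0%N (nth [::] A0_table i) j)%:R / 4).

Definition Amat (k : 'I_8) : 'M[rat]_8 :=
  \matrix_(i < 8, j < 8) A0 (xor8 i k) (xor8 j k).

Definition e (i : 'I_8) : 'rV[rat]_8 := delta_mx 0 i.

Definition Aprod n (w : 'I_n -> 'I_8) : 'M[rat]_8 := \prod_(i < n) Amat (w i).

(* Main.v *)
Require Import Defs.
From mathcomp Require Import all_boot all_order all_algebra.
From mathcomp Require Import zify.
Set Implicit Arguments. Unset Strict Implicit.
Definition nb2 (m : nat) := odd (m %/ 4).
Definition nb1 (m : nat) := odd (m %/ 2).
Definition nb0 (m : nat) := odd m.
Definition nx (m k : nat) : nat := 4 * (nb2 m (+) nb2 k) + 2 * (nb1 m (+) nb1 k) + (nb0 m (+) nb0 k).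
Definition tab (m l : nat) := nth 0%N (nth [::] A0_table m) l.
Lemma nx_lt m k : nx m k < 8.
Proof. by rewrite /nx; case: (_ (+) _); case: (_ (+) _); case: (_ (+) _). Qed.
Lemma xor8_val (i k : 'I_8) : nat_of_ord (xor8 i k) = nx i k.
Proof. by rewrite /xor8 inordK // nx_lt. Qed.
Lemma val4 : nat_of_ord (inord 4 : 'I_8) = 4.
Proof. by rewrite inordK. Qed.
Lemma all8 (P : nat -> bool) : all P (iota 0 8) -> forall r : 'I_8, P r.
Proof. by move/allP => H r; apply: H; rewrite mem_iota /= ltn_ord. Qed.
Lemma C1 : all (fun m => nx (nx m 4) 4 == m) (iota 0 8). Proof. by vm_compute. Qed.
Lemma C3 : all (fun r => all (fun k => nx r (nx k 4) == nx (nx r 4) k) (iota 0 8)) (iota 0 8).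
Proof. by vm_compute. Qed.
Lemma C4 : all (fun k => all (fun r => all (fun l =>
  (~~nb2 k && nb2 r && ~~nb2 l) ==> (tab (nx r k) (nx l k) == 0)) (iota 0 8)) (iota 0 8)) (iota 0 8).
Proof. by vm_compute. Qed.
Lemma C5 : all (fun k => all (fun r => all (fun l =>
  (nb2 k && ~~nb2 l) ==> (tab (nx (nx r 4) k) (nx l k) == tab (nx r k) (nx l k))) (iota 0 8)) (iota 0 8)) (iota 0 8).
Proof. by vm_compute. Qed.
Lemma xorK (r : 'I_8) : xor8 (xor8 r (inord 4)) (inord 4) = r.
Proof. by apply: val_inj; rewrite /= !xor8_val val4; apply/eqP; apply: (all8 C1). Qed.
Lemma xorA (r k : 'I_8) : xor8 r (xor8 k (inord 4)) = xor8 (xor8 r (inord 4)) k.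
Proof.
apply: ord_inj; rewrite !xor8_val !val4; apply/eqP.
exact: (all8 (all8 C3 r) k).
Qed.
Lemma xor_inj (a b : 'I_8) : (xor8 a (inord 4) == xor8 b (inord 4)) = (a == b).
Proof.
apply/eqP/eqP => [H|->] //; by rewrite -(xorK a) H xorK.
Qed.
Lemma omega_bit2 n (a b c : bvec n) i : bit2 (omega a b c i) = a i.
Proof.
rewrite /omega /bit2 inordK; first by case: (a i); case: (b i); case: (c i).
by case: (a i); case: (b i); case: (c i).
Qed.
Lemma omega_flip n (a a' b c : bvec n) i : a' i = ~~ a i ->
  omega a' b c i = xor8 (omega a b c i) (inord 4).
Proof.
move=> H; apply: ord_inj; rewrite xor8_val val4 /omega H.
rewrite !inordK; try by case: (a i); case: (b i); case: (c i).
Qed.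

Definition S n (f : nat -> bool) := (\sum_(p < n) f p * 2 ^ p)%N.
Lemma S_lt n f : S n f < 2 ^ n.
Proof.
elim: n => [|n IH]; first by rewrite /S big_ord0.
rewrite /S big_ord_recr /= -/(S n f) expnS.
case: (f n) => /=; lia.
Qed.
Lemma S_bit n f q : q < n -> odd (S n f %/ 2 ^ q) = f q.
Proof.
elim: n f q => [//|n IH] f q qn.
have E : S n.+1 f = f 0%N + S n (fun p => f p.+1) * 2.
  rewrite /S big_ord_recl /= expn0 muln1 big_distrl /=; congr (_ + _).
  by apply: eq_bigr => i _; rewrite expnS mulnCA mulnC.
case: q qn => [|q] qn.
  by rewrite expn0 divn1 E oddD oddM /= andbF addbF; case: (f 0%N).
rewrite expnS divnMA E addnC divnMDl //.
have -> : f 0%N %/ 2 = 0 by case: (f 0%N).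
by rewrite addn0 IH.
Qed.
Lemma geom t n : t <= n -> 2 ^ t + \sum_(t <= p < n) 2 ^ p = 2 ^ n.
Proof.
elim: n => [|n IH]; first by rewrite leqn0 => /eqP ->; rewrite big_geq.
rewrite leq_eqVlt => /orP [/eqP -> | ]; first by rewrite big_geq // addn0.
rewrite ltnS => tn; rewrite big_nat_recr //= addnA IH // expnS; lia.
Qed.
Lemma S_compl n t (y : nat -> bool) : t < n -> y t -> (forall p, p < t -> y p = false) ->
  S n (fun p => if p <= t then y p else ~~ y p) + S n y = 2 ^ n.
Proof.
move=> tn yt ylo.
rewrite /S -big_split /=.
rewrite (eq_bigr (fun p : 'I_n => (t == p) * 2 ^ p + (t <= p) * 2 ^ p)); last first.
  move=> p _; rewrite -!mulnDl; congr (_ * _).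
  case: (ltngtP p t) => [pt|tp|->]; first by rewrite ylo // (ltnW pt) /=; lia.
    by case: (y p).
  by rewrite yt.
rewrite big_split /= (bigD1 (Ordinal tn)) //= eqxx mul1n big1 ?addn0; last first.
  by move=> i /negbTE; rewrite eq_sym -(inj_eq val_inj) /= => ->.
rewrite -(big_mkord xpredT (fun p => (t <= p) * 2 ^ p)).
rewrite (@big_cat_nat _ _ _ t 0 n _ _ (leq0n t) (ltnW tn)) /= big_nat_cond big1 ?add0n; last first.
  by move=> p /andP [/andP [_ pt] _]; rewrite leqNgt pt.
rewrite -(geom (ltnW tn)); congr (_ + _).
by apply: eq_big_nat => p /andP [tp _]; rewrite tp mul1n.
Qed.
Lemma bval_S n (a : bvec n.+1) : bval a = S n.+1 (fun p => a (inord (n - p))).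
Proof.
rewrite /S (reindex_inj rev_ord_inj) /=; apply: eq_bigr => i _.
by rewrite subSS subKn ?inord_val // -ltnS.
Qed.
Lemma bneg_bits n (a : bvec n.+1) t : t <= n -> a (inord (n - t)) ->
  (forall p, p < t -> a (inord (n - p)) = false) ->
  forall i : 'I_n.+1, bneg a i = if n - i <= t then a i else ~~ a i.
Proof.
move=> tn yt ylo i.
have H := S_compl (n:=n.+1) tn yt ylo.
rewrite /bneg /of_nat ffunE /= bval_S.
have -> : 2 ^ n.+1 - S n.+1 (fun p => a (inord (n - p))) =
   S n.+1 (fun p => if p <= t then a (inord (n - p)) else ~~ a (inord (n - p))) by lia.
rewrite modn_small ?S_lt // S_bit; last by rewrite ltnS leq_subr.
by rewrite subKn ?inord_val // -ltnS.
Qed.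
Local Open Scope ring_scope.
Import GRing.Theory.

Lemma Amat_E k r l : Amat k r l = (tab (nx r k) (nx l k))%:R / 4.
Proof. by rewrite !mxE !xor8_val. Qed.

Definition D : 'M[rat]_8 := \matrix_(r, l) ((xor8 r (inord 4) == l)%:R).

Lemma mulDmx m (M : 'M[rat]_(8, m)) r l : (D *m M) r l = M (xor8 r (inord 4)) l.
Proof.
rewrite !mxE (bigD1 (xor8 r (inord 4))) //= mxE eqxx mul1r big1 ?addr0 //.
by move=> q /negbTE; rewrite mxE eq_sym => ->; rewrite mul0r.
Qed.
Lemma mulmxD m (M : 'M[rat]_(m, 8)) r l : (M *m D) r l = M r (xor8 l (inord 4)).
Proof.
rewrite !mxE (bigD1 (xor8 l (inord 4))) //= mxE xorK eqxx mulr1 big1 ?addr0 //.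
move=> q Hq; rewrite mxE.
have -> : (xor8 q (inord 4) == l) = false.
  by apply/negbTE; apply: contra Hq => /eqP <-; rewrite xorK.
by rewrite mulr0.
Qed.
Lemma DD : D *m D = 1%:M.
Proof.
apply/matrixP => r l; rewrite mulDmx !mxE xorK.
by case: (r == l).
Qed.
Lemma Amat_flip k : Amat (xor8 k (inord 4)) = D *m Amat k *m D.
Proof.
apply/matrixP => r l; rewrite mulmxD mulDmx !mxE.
by rewrite !xorA.
Qed.
Definition Kp (M : 'M[rat]_8) := forall r l : 'I_8, bit2 r -> ~~ bit2 l -> M r l = 0.
Lemma Kp1 : Kp 1.
Proof.
move=> r l br bl; rewrite !mxE.
have -> : (r == l) = false by apply/negbTE; apply: contra bl => /eqP <-.
by [].
Qed.
Lemma KpM M N : Kp M -> Kp N -> Kp (M * N).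
Proof.
move=> HM HN r l br bl; rewrite -mulmxE mxE big1 // => m _.
case bm: (bit2 m); first by rewrite HN ?bm // mulr0.
by rewrite HM ?bm // mul0r.
Qed.
Lemma KpA k : ~~ bit2 k -> Kp (Amat k).
Proof.
move=> bk r l br bl; rewrite Amat_E.
have H := all8 (all8 (all8 C4 k) r) l.
move: H; rewrite -[nb2 k]/(bit2 k) -[nb2 r]/(bit2 r) -[nb2 l]/(bit2 l) bk br bl /= => /eqP ->.
by rewrite mul0r.
Qed.
Lemma Kp_col M : Kp M -> forall r, bit2 r -> (M *m (e 0)^T) r 0 = 0.
Proof.
move=> HM r br; rewrite mxE big1 // => l _; rewrite !mxE.
case: (eqVneq l 0) => [->|nl]; first by rewrite HM // mul0r.
by rewrite andbF mulr0.
Qed.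
Lemma inv_col k (u : 'cV[rat]_8) : bit2 k -> (forall r, bit2 r -> u r 0 = 0) ->
  D *m (Amat k *m u) = Amat k *m u.
Proof.
move=> bk Hu; apply/matrixP => r z; rewrite mulDmx (ord1 z) !mxE.
apply: eq_bigr => l _.
case bl: (bit2 l); first by rewrite Hu // !mulr0.
rewrite !Amat_E.
have H := all8 (all8 (all8 C5 k) r) l.
move: H; rewrite -[nb2 k]/(bit2 k) -[nb2 l]/(bit2 l) bk bl /= => /eqP H.
by rewrite !xor8_val val4 H.
Qed.

Theorem lemma2 (n : nat) (alpha beta gamma : bvec n) :
  alpha != [ffun _ => false] ->
  forall i : 'I_8,
    e i *m Aprod (omega alpha beta gamma) *m (e 0)^T =
    e (xor8 i (inord 4)) *m Aprod (omega (bneg alpha) beta gamma) *m (e 0)^T.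
Proof.
case: n alpha beta gamma => [|n] alpha beta gamma Hne i.
  by exfalso; move/eqP: Hne; apply; apply/ffunP => -[].
case: (boolP [exists k, alpha k]) => [/existsP [i0 ai0] | /existsPn H]; last first.
  by exfalso; move/eqP: Hne; apply; apply/ffunP => k; rewrite ffunE; exact/negbTE/H.
have Ex : exists p, (p <= n)%N && alpha (inord (n - p)).
  by exists (n - i0)%N; rewrite leq_subr subKn ?inord_val // -ltnS.
case: (ex_minnP Ex) => t /andP [tn yt] tmin.
have ylo : forall p, (p < t)%N -> alpha (inord (n - p)) = false.
  move=> p pt; apply/negbTE/negP => ap.
  have := tmin p; rewrite ap (leq_trans (ltnW pt) tn) /= => /(_ isT).
  by rewrite leqNgt pt.
have BN := bneg_bits tn yt ylo.
set w := omega alpha beta gamma.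
set w' := omega (bneg alpha) beta gamma.
set j := (n - t)%N.
have jn : (j < n.+1)%N by rewrite ltnS leq_subr.
have W1 : forall p, (p < j)%N -> w' (inord p) = xor8 (w (inord p)) (inord 4).
  move=> p pj; apply: omega_flip; rewrite BN inordK ?(ltn_trans pj jn) //.
  rewrite ifF //; apply/negbTE; rewrite -ltnNge; lia.
have W2 : forall p, (j <= p < n.+1)%N -> w' (inord p) = w (inord p).
  move=> p /andP [jp pn]; rewrite /w' /w /omega BN inordK // ifT //; lia.
have W3 : bit2 (w (inord j)) by rewrite omega_bit2.
have W4 : forall p, (j < p < n.+1)%N -> ~~ bit2 (w (inord p)).
  move=> p /andP [jp pn]; rewrite omega_bit2.
  have -> : (inord p : 'I_n.+1) = inord (n - (n - p)) by rewrite subKn // -ltnS.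
  rewrite ylo //; lia.
have Split : forall (v : 'I_n.+1 -> 'I_8), Aprod v =
    (\prod_(0 <= p < j) Amat (v (inord p))) *
    (Amat (v (inord j)) * \prod_(j.+1 <= p < n.+1) Amat (v (inord p))).
  move=> v; rewrite /Aprod (eq_bigr (fun k : 'I_n.+1 => Amat (v (inord k)))); last first.
    by move=> k _; rewrite inord_val.
  rewrite -(big_mkord xpredT (fun p => Amat (v (inord p)))).
  by rewrite (@big_cat_nat _ _ _ j 0 n.+1) ?leq0n ?(ltnW jn) //= (big_ltn jn).
rewrite !Split.
have DD' : D * D = 1 by rewrite -mulmxE DD.
have U' : \prod_(0 <= p < j) Amat (w' (inord p)) = D * (\prod_(0 <= p < j) Amat (w (inord p))) * D.
  rewrite big_nat_cond (eq_bigr (fun p => D * Amat (w (inord p)) * D)); last first.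
    by move=> p /andP [/andP [_ pj] _]; rewrite W1 // Amat_flip !mulmxE.
  rewrite -big_nat_cond.
  rewrite (big_morph (fun M => D * M * D) (id1 := 1) (op1 := *%R)) //.
    by move=> x y; rewrite !mulrA -(mulrA _ D D) DD' mulr1.
  by rewrite mulr1 DD'.
have L' : \prod_(j.+1 <= p < n.+1) Amat (w' (inord p)) = \prod_(j.+1 <= p < n.+1) Amat (w (inord p)).
  by apply: eq_big_nat => p /andP [jp pn]; rewrite W2 // (ltnW jp).
rewrite U' L' W2 ?leqnn ?jn //.
set U := \prod_(0 <= p < j) Amat (w (inord p)).
set L := \prod_(j.+1 <= p < n.+1) Amat (w (inord p)).
set Aj := Amat (w (inord j)).
have Lk : Kp L.
  rewrite /L big_nat_cond; apply: big_ind => [|x y|p /andP [/andP [jp pn] _]].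
  - exact: Kp1.
  - exact: KpM.
  - by apply: KpA; apply: W4; rewrite jp pn.
have Inv := inv_col W3 (Kp_col Lk).
have eD : e (xor8 i (inord 4)) *m D = e i.
  by apply/matrixP => a b; rewrite mulmxD !mxE xor_inj.
rewrite -!mulmxE !mulmxA eD -!mulmxA.
by rewrite Inv.
Qed.
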